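(* In any correlational scenario with finite setting and outcome sets, the set $\mathcal{DC}$ of deterministically consistent correlations is convex and equals the convex hull of the deterministic correlations it contains; in particular it is a convex polytope all of whose vertices are deterministic correlations.
   Context: Parties $S_1,\dots,S_N$ with finite setting sets $A_k$ and outcome sets $X_k$; a correlation is a conditional distribution $p(\vec x|\vec a)$; deterministic correlations are those of the form $\delta_{\vec x,f(\vec a)}$. For finite sets $I_k,O_k$, a conditional distribution $p(\vec i|\vec o)$ is a classical process if for all finite $A_k,X_k$ and all local interventions $p(x_k,o_k|a_k,i_k)$ the expression $\sum_{\vec i,\vec o}\prod_k p(x_k,o_k|a_k,i_k)p(\vec i|\vec o)$ is a valid conditional probability distribution over $\vec x$ for each $\vec a$. A process function is a function $\omega:\vec O\to\vec I$ with $\delta_{\vec i,\omega(\vec o)}$ a classical process. The deterministic-extrema polytope (for given $I_k,O_k$) is the convex hull of $\{\delta_{\vec i,\omega(\vec o)}\}$ over process functions $\omega$. A correlation is deterministically consistent if it equals $\sum_{\vec i,\vec o}\prod_k p(x_k,o_k|a_k,i_k)p(\vec i|\vec o)$ for some finite $I_k,O_k$, local interventions, and $p(\vec i|\vec o)$ in the deterministic-extrema polytope. *)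

(* Defs.v *)
From HB Require Import structures.
From mathcomp Require Import all_boot all_order all_algebra.
From mathcomp Require Import reals.
Set Implicit Arguments. Unset Strict Implicit. Unset Printing Implicit Defensive.
Import Order.TTheory GRing.Theory Num.Theory.
Local Open Scope ring_scope.

(* Finite sets are modelled by ordinals 'I_n.  For N parties with
   per-party set sizes n : 'I_N -> nat, a vector (one element per party). *)
Definition vec (N : nat) (n : 'I_N -> nat) : finType :=
  {dffun forall k : 'I_N, 'I_(n k)}.

Section Defs.
Variable R : realType.

Definition is_cond (T U : finType) (p : T -> U -> R) : Prop :=
  (forall t u, 0 <= p t u) /\ (forall u, \sum_(t : T) p t u = 1).

Definition conv_hull (T U : finType) (S : (T -> U -> R) -> Prop)
  (p : T -> U -> R) : Prop :=
  exists (m : nat) (w : 'I_m -> R) (q : 'I_m -> T -> U -> R),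
    [/\ forall j, 0 <= w j, \sum_(j < m) w j = 1, forall j, S (q j)
      & forall t u, p t u = \sum_(j < m) w j * q j t u].

Definition convex_set (T U : finType) (S : (T -> U -> R) -> Prop) : Prop :=
  forall (p q : T -> U -> R) (l : R), 0 <= l -> l <= 1 -> S p -> S q ->
    S (fun t u => l * p t u + (1 - l) * q t u).

(* Local intervention of party k: p(x_k, o_k | a_k, i_k). *)
Definition local_int (N : nat) (nA nX nI nO : 'I_N -> nat) :=
  forall k : 'I_N, 'I_(nX k) * 'I_(nO k) -> 'I_(nA k) * 'I_(nI k) -> R.

Definition valid_local_int N (nA nX nI nO : 'I_N -> nat)
  (L : local_int nA nX nI nO) : Prop :=
  forall k, is_cond (L k).

Definition compose N (nA nX nI nO : 'I_N -> nat)
  (L : local_int nA nX nI nO) (W : vec nI -> vec nO -> R)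
  (x : vec nX) (a : vec nA) : R :=
  \sum_(i : vec nI) \sum_(o : vec nO)
     (\prod_(k < N) L k (x k, o k) (a k, i k)) * W i o.

Definition classical_process N (nI nO : 'I_N -> nat)
  (W : vec nI -> vec nO -> R) : Prop :=
  forall (nA nX : 'I_N -> nat) (L : local_int nA nX nI nO),
    valid_local_int L -> is_cond (compose L W).

Definition delta_fun (T U : finType) (f : U -> T) : T -> U -> R :=
  fun t u => if t == f u then 1 else 0.

Definition process_function N (nI nO : 'I_N -> nat)
  (omega : vec nO -> vec nI) : Prop :=
  classical_process (delta_fun omega).

Definition det_extrema_polytope N (nI nO : 'I_N -> nat)
  (W : vec nI -> vec nO -> R) : Prop :=
  conv_hull (fun V => exists omega, process_function omega /\
                                    V = delta_fun omega) W.

Definition deterministic_corr N (nA nX : 'I_N -> nat)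
  (p : vec nX -> vec nA -> R) : Prop :=
  exists f : vec nA -> vec nX, p = delta_fun f.

Definition det_consistent N (nA nX : 'I_N -> nat)
  (p : vec nX -> vec nA -> R) : Prop :=
  exists (nI nO : 'I_N -> nat) (L : local_int nA nX nI nO)
         (W : vec nI -> vec nO -> R),
    [/\ valid_local_int L, det_extrema_polytope W
      & forall x a, p x a = compose L W x a].

End Defs.

(* Main.v *)
Require Import Defs.
From HB Require Import structures.
From mathcomp Require Import all_boot all_order all_algebra.
From mathcomp Require Import reals.
From mathcomp Require Import ring lra zify.
From Stdlib Require Import FunctionalExtensionality IndefiniteDescription.
Set Implicit Arguments. Unset Strict Implicit. Unset Printing Implicit Defensive.
Import Order.TTheory GRing.Theory Num.Theory.
Local Open Scope ring_scope.

Lemma split_l m n (i : 'I_m) : split (lshift n i) = inl i.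
Proof. exact: (unsplitK (inl i)). Qed.
Lemma split_r m n (i : 'I_n) : split (rshift m i) = inr i.
Proof. exact: (unsplitK (inr i)). Qed.

Section Conv.
Variable R : realType.

Lemma convex_seq (T U : finType) (C : (T -> U -> R) -> Prop)
  (hC : convex_set C) (I : eqType) (r : seq I) (w : I -> R) (q : I -> T -> U -> R) :
  (forall i, 0 <= w i) -> (forall i, C (q i)) -> 0 < \sum_(i <- r) w i ->
  C (fun t u => (\sum_(i <- r) w i * q i t u) / \sum_(i <- r) w i).
Proof.
move=> w0 Cq; elim: r => [|x r IH]; first by rewrite big_nil ltxx.
rewrite big_cons => Hs.
have s0 : 0 <= \sum_(i <- r) w i by apply: sumr_ge0.
case: (ltrgtP 0 (\sum_(i <- r) w i)) s0 => // [sp _|sz _].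
- set s := \sum_(i <- r) w i in Hs IH sp *.
  have wxs : w x + s != 0 by rewrite gt_eqF.
  have sn : s != 0 by rewrite gt_eqF.
  have l0 : 0 <= w x / (w x + s) by rewrite divr_ge0 // ltW.
  have l1 : w x / (w x + s) <= 1.
    by rewrite ler_pdivrMr // mul1r lerDl ltW.
  have H := hC (q x) _ _ l0 l1 (Cq x) (IH sp).
  suff <- : (fun t u => w x / (w x + s) * q x t u +
      (1 - w x / (w x + s)) * ((\sum_(i <- r) w i * q i t u) / s)) =
      (fun t u => (\sum_(j <- (x :: r)) w j * q j t u) / (w x + s)) by [].
  apply: functional_extensionality => t; apply: functional_extensionality => u.
  rewrite big_cons; field; by rewrite wxs sn.
- have wr : forall i, i \in r -> w i = 0.
    move=> i ir; apply/eqP; move/esym/eqP: sz; rewrite psumr_eq0 //.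
    by move/allP/(_ i ir)/implyP/(_ isT).
  have -> : \sum_(i <- r) w i = 0 by rewrite -sz.
  suff -> : (fun t u => (\sum_(j <- (x :: r)) w j * q j t u) / (w x + 0)) = q x by [].
  apply: functional_extensionality => t; apply: functional_extensionality => u.
  rewrite big_cons big_seq big1 ?addr0; last by move=> i /wr ->; rewrite mul0r.
  rewrite -sz addr0 in Hs; by rewrite mulrAC divff ?mul1r // gt_eqF.
Qed.

Lemma convex_fin (T U : finType) (C : (T -> U -> R) -> Prop)
  (hC : convex_set C) (I : finType) (w : I -> R) (q : I -> T -> U -> R) p :
  (forall i, 0 <= w i) -> \sum_i w i = 1 -> (forall i, C (q i)) ->
  (forall t u, p t u = \sum_i w i * q i t u) -> C p.
Proof.
move=> w0 w1 Cq Hp.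
have := convex_seq hC (r := index_enum I) w0 Cq; rewrite w1 ltr01 => /(_ isT).
suff -> : p = (fun t u => (\sum_(i <- index_enum I) w i * q i t u) / 1) by [].
apply: functional_extensionality => t; apply: functional_extensionality => u.
by rewrite divr1 Hp.
Qed.

Lemma conv_hull_sub (T U : finType) (S C : (T -> U -> R) -> Prop) p :
  convex_set C -> (forall q, S q -> C q) -> conv_hull S p -> C p.
Proof.
move=> hC SC [m [w [q [w0 w1 Sq Hp]]]].
by apply: (convex_fin hC w0 w1) Hp => j; apply: SC.
Qed.

Lemma conv_hull_in (T U : finType) (S : (T -> U -> R) -> Prop) p :
  S p -> conv_hull S p.
Proof.
move=> Sp; exists 1%N, (fun _ => 1), (fun _ => p); split.
- by move=> _; apply: ler01.
- by rewrite big_ord1.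
- by [].
- by move=> t u; rewrite big_ord1 mul1r.
Qed.

Lemma conv_hull_convex (T U : finType) (S : (T -> U -> R) -> Prop) :
  convex_set (conv_hull S).
Proof.
move=> p q l l0 l1 [m1 [w1 [q1 [w10 w11 S1 H1]]]] [m2 [w2 [q2 [w20 w21 S2 H2]]]].
exists (m1 + m2)%N,
  (fun j => match split j with inl j1 => l * w1 j1 | inr j2 => (1 - l) * w2 j2 end),
  (fun j => match split j with inl j1 => q1 j1 | inr j2 => q2 j2 end).
split.
- move=> j; case: split => j'; apply: mulr_ge0 => //; by rewrite subr_ge0.
- rewrite big_split_ord /=.
  under eq_bigr do rewrite split_l.
  under [X in _ + X = _]eq_bigr do rewrite split_r.
  by rewrite -!mulr_sumr w11 w21 !mulr1 addrC subrK.
- by move=> j; case: split.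
- move=> t u; rewrite big_split_ord /= H1 H2.
  under eq_bigr do rewrite split_l.
  under [X in _ = _ + X]eq_bigr do rewrite split_r.
  rewrite !mulr_sumr; congr (_ + _); apply: eq_bigr => j _; by rewrite mulrA.
Qed.

End Conv.


Section Comp.
Variable R : realType.

Lemma prod_ind (I : finType) (P : pred I) :
  \prod_i (if P i then 1 else 0 : R) = if [forall i, P i] then 1 else 0.
Proof.
case: ifP => [/forallP H|/negbT]; first by apply: big1 => i _; rewrite H.
rewrite negb_forall => /existsP [i /negbTE Pi].
by rewrite (bigD1 i) //= Pi mul0r.
Qed.

Lemma compose_delta N (nA nX nI nO : 'I_N -> nat) (L : local_int R nA nX nI nO)
  (om : vec nO -> vec nI) x a :
  compose L (delta_fun R om) x a =
  \sum_(o : vec nO) \prod_(k < N) L k (x k, o k) (a k, om o k).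
Proof.
rewrite /compose exchange_big; apply: eq_bigr => o _.
rewrite (bigD1 (om o)) //= [X in _ + X]big1 ?addr0.
  by rewrite /delta_fun eqxx mulr1.
by move=> i ne; rewrite /delta_fun (negbTE ne) mulr0.
Qed.

Lemma compose_lin N (nA nX nI nO : 'I_N -> nat) (L : local_int R nA nX nI nO)
  (J : finType) (w : J -> R) (V : J -> vec nI -> vec nO -> R) x a :
  compose L (fun i o => \sum_j w j * V j i o) x a =
  \sum_j w j * compose L (V j) x a.
Proof.
rewrite /compose.
under eq_bigr do under eq_bigr do rewrite mulr_sumr.
under eq_bigr do rewrite exchange_big.
rewrite exchange_big; apply: eq_bigr => j _.
rewrite mulr_sumr; apply: eq_bigr => i _; rewrite mulr_sumr; apply: eq_bigr => o _.
by rewrite mulrCA.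
Qed.

Lemma compose_ge0 N (nA nX nI nO : 'I_N -> nat) (L : local_int R nA nX nI nO)
  W x a : valid_local_int L -> (forall i o, 0 <= W i o) -> 0 <= compose L W x a.
Proof.
move=> HL HW; apply: sumr_ge0 => i _; apply: sumr_ge0 => o _.
by apply: mulr_ge0 => //; apply: prodr_ge0 => k _; case: (HL k).
Qed.


Lemma card_pairI m n : #|{:'I_m * 'I_n}| = (m * n)%N.
Proof. by rewrite card_prod !card_ord. Qed.
Definition enc m n (p : 'I_m * 'I_n) : 'I_(m * n) :=
  cast_ord (card_pairI m n) (enum_rank p).
Definition dec m n (k : 'I_(m * n)) : 'I_m * 'I_n :=
  enum_val (cast_ord (esym (card_pairI m n)) k).
Lemma encK m n : cancel (@enc m n) (@dec m n).
Proof. by move=> p; rewrite /enc /dec cast_ordK enum_rankK. Qed.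
Lemma decK m n : cancel (@dec m n) (@enc m n).
Proof. by move=> k; rewrite /enc /dec enum_valK cast_ordKV. Qed.

Lemma sum_delta_ffun N (n : 'I_N -> nat) (c : forall k, 'I_(n k))
  (F : vec n -> R) :
  \sum_(o : vec n) F o * \prod_k (if o k == c k then 1 else 0) =
  F [ffun k => c k].
Proof.
under eq_bigr do rewrite prod_ind.
rewrite (bigD1 ([ffun k => c k] : vec n)) //= [X in _ + X]big1 ?addr0.
  by case: forallP => [_|[]]; [rewrite mulr1|move=> k; rewrite ffunE].
move=> o ne; case: forallP => [H|_]; last by rewrite mulr0.
by case/eqP: ne; apply/ffunP => k; rewrite ffunE; apply/eqP.
Qed.

Definition postproc N (nI nO nI' nO' : 'I_N -> nat) (om : vec nO -> vec nI)
  (e : forall k, 'I_(nI k) -> 'I_(nI' k)) (pi : forall k, 'I_(nO' k) -> 'I_(nO k))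
  (o' : vec nO') : vec nI' := [ffun k => e k (om [ffun k => pi k (o' k)] k)].

Lemma proc_post N (nI nO nI' nO' : 'I_N -> nat) (om : vec nO -> vec nI)
  (e : forall k, 'I_(nI k) -> 'I_(nI' k)) (pi : forall k, 'I_(nO' k) -> 'I_(nO k)) :
  process_function R om ->
  process_function R (postproc om e pi).
Proof.
move=> Hom nA nX L' HL'; split.
  move=> x a; apply: compose_ge0 => // i o; rewrite /delta_fun.
  by case: ifP => _; rewrite ?ler01.
move=> a.
pose nX2 := fun k => (nX k * nO' k)%N.
pose L : local_int R nA nX2 nI nO := fun k yo ai =>
  L' k (dec yo.1) (ai.1, e k ai.2) *
  (if yo.2 == pi k (dec yo.1).2 then 1 else 0).
have HL : valid_local_int L.
  move=> k; split.
    move=> [y o] [a' i]; rewrite /L /=; apply: mulr_ge0; first by case: (HL' k).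
    by case: ifP => _; rewrite ?ler01.
  move=> [a' i].
  transitivity (\sum_(y : 'I_(nX2 k)) \sum_(o : 'I_(nO k)) L k (y, o) (a', i)).
    by rewrite pair_bigA; apply: eq_bigr => [[y o] _].
  transitivity (\sum_(y : 'I_(nX2 k)) L' k (dec y) (a', e k i)).
    apply: eq_bigr => y _; rewrite /L /=.
    rewrite (bigD1 (pi k (dec y).2)) //= eqxx mulr1 [X in _ + X]big1 ?addr0 //.
    by move=> o /negbTE ->; rewrite mulr0.
  rewrite -(proj2 (HL' k) (a', e k i)).
  rewrite (reindex (@dec _ _)) //=; exists (@enc _ _) => p _.
    exact: decK.
  exact: encK.
have := proj2 (Hom nA nX2 L HL) a.
under eq_bigr do rewrite compose_delta.
under eq_bigr => y _.
  under eq_bigr => o _.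
    rewrite /L /= big_split /=.
  over.
  rewrite (sum_delta_ffun (fun k => pi k (dec (y k)).2)
     (fun o => \prod_k L' k (dec (y k)) (a k, e k (om o k)))).
over.
move=> H; rewrite -{}H.
rewrite [LHS](eq_bigr _ (fun x _ => compose_delta L' (postproc om e pi) x a)).
pose Y (p : vec nX * vec nO') : vec nX2 := [ffun k => enc (p.1 k, p.2 k)].
pose Yi (y : vec nX2) : vec nX * vec nO' :=
  ([ffun k => (dec (y k)).1], [ffun k => (dec (y k)).2]).
rewrite (reindex Y) /=; last first.
  exists Yi => [[x o] _|y _]; rewrite /Y /Yi /=.
    by congr (_, _); apply/ffunP => k; rewrite !ffunE encK.
  by apply/ffunP => k; rewrite !ffunE -surjective_pairing decK.
rewrite pair_bigA; apply: eq_bigr => [[x o] _] /=.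
apply: eq_bigr => k _; rewrite /Y /postproc !ffunE encK /=.
congr (L' k _ (_, e k (om _ k))).
by apply/ffunP => j; rewrite !ffunE encK.
Qed.


Definition isl m n (z : 'I_(m + n)) : bool := if split z is inl _ then true else false.

Section Mix.
Local Unset Implicit Arguments.
Variables (N : nat) (nA nX nI1 nO1 nI2 nO2 : 'I_N -> nat).
Variables (L1 : local_int R nA nX nI1 nO1) (L2 : local_int R nA nX nI2 nO2).
Variables (d1 : vec nO1) (d2 : vec nO2).

Definition nIm k := (nI1 k + nI2 k)%N.
Definition nOm k := (nO1 k + nO2 k)%N.

Definition Lmix : local_int R nA nX nIm nOm := fun k xo ai =>
  match split ai.2, split xo.2 with
  | inl i1, inl o1 => L1 k (xo.1, o1) (ai.1, i1)
  | inr i2, inr o2 => L2 k (xo.1, o2) (ai.1, i2)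
  | _, _ => 0 end.

Lemma Lmix_valid : valid_local_int L1 -> valid_local_int L2 -> valid_local_int Lmix.
Proof.
move=> H1 H2 k; split.
  move=> [x o] [a i]; rewrite /Lmix /=.
  case: split => i'; case: split => o' //; by [case: (H1 k)|case: (H2 k)].
move=> [a i].
transitivity (\sum_(x : 'I_(nX k)) \sum_(o : 'I_(nOm k)) Lmix k (x, o) (a, i)).
  by rewrite pair_bigA; apply: eq_bigr => [[x o] _].
rewrite /Lmix /=; case: (split i) => [i1|i2].
- transitivity (\sum_(x : 'I_(nX k)) \sum_o1 L1 k (x, o1) (a, i1)); last first.
    rewrite pair_bigA -(proj2 (H1 k) (a, i1)); by apply: eq_bigr => [[]].
  apply: eq_bigr => x _.
  rewrite big_split_ord /= [X in _ + X]big1 ?addr0; last by move=> o _; rewrite split_r.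
  by apply: eq_bigr => o _; rewrite split_l.
- transitivity (\sum_(x : 'I_(nX k)) \sum_o1 L2 k (x, o1) (a, i2)); last first.
    rewrite pair_bigA -(proj2 (H2 k) (a, i2)); by apply: eq_bigr => [[]].
  apply: eq_bigr => x _.
  rewrite big_split_ord /= big1 ?add0r; last by move=> o _; rewrite split_l.
  by apply: eq_bigr => o _; rewrite split_r.
Qed.

Definition pi1 k (o : 'I_(nOm k)) : 'I_(nO1 k) :=
  match split o with inl o1 => o1 | inr _ => d1 k end.
Definition pi2 k (o : 'I_(nOm k)) : 'I_(nO2 k) :=
  match split o with inl _ => d2 k | inr o2 => o2 end.
Definition e1 k (i : 'I_(nI1 k)) : 'I_(nIm k) := lshift (nI2 k) i.
Definition e2 k (i : 'I_(nI2 k)) : 'I_(nIm k) := rshift (nI1 k) i.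

Lemma embed1 (om : vec nO1 -> vec nI1) x a :
  compose Lmix (delta_fun R (postproc om e1 pi1)) x a =
  compose L1 (delta_fun R om) x a.
Proof.
rewrite !compose_delta.
rewrite (bigID (fun o : vec nOm => [forall k, isl (o k)])) /=.
rewrite [X in _ + X]big1 ?addr0; last first.
  move=> o; rewrite negb_forall => /existsP [k Hk].
  rewrite (bigD1 k) //= {2}/postproc ffunE /Lmix /= /e1 split_l.
  by move: Hk; rewrite /isl; case: split => // o2 _; rewrite mul0r.
pose emb (o1 : vec nO1) : vec nOm := [ffun k => lshift (nO2 k) (o1 k)].
rewrite (reindex_onto emb (fun o : vec nOm => [ffun k => pi1 k (o k)])); last first.
  move=> o /forallP Ho; apply/ffunP => k; rewrite !ffunE /pi1.
  move: (Ho k); rewrite /isl; case E: (split (o k)) => [o1|//] _.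
  by rewrite -[o k]splitK E.
have embK : forall o1, [ffun k => pi1 k (emb o1 k)] = o1.
  by move=> o1; apply/ffunP => k; rewrite !ffunE /pi1 split_l.
rewrite (eq_bigl xpredT); last first.
  move=> o1; rewrite embK eqxx andbT; apply/forallP => k.
  by rewrite /emb ffunE /isl split_l.
apply: eq_bigr => o1 _; apply: eq_bigr => k _.
by rewrite /postproc ffunE embK /Lmix /= /e1 /emb ffunE !split_l.
Qed.

Lemma embed2 (om : vec nO2 -> vec nI2) x a :
  compose Lmix (delta_fun R (postproc om e2 pi2)) x a =
  compose L2 (delta_fun R om) x a.
Proof.
rewrite !compose_delta.
rewrite (bigID (fun o : vec nOm => [forall k, ~~ isl (o k)])) /=.
rewrite [X in _ + X]big1 ?addr0; last first.
  move=> o; rewrite negb_forall => /existsP [k Hk].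
  rewrite (bigD1 k) //= {2}/postproc ffunE /Lmix /= /e2 split_r.
  by move: Hk; rewrite /isl; case: split => // o2 _; rewrite mul0r.
pose emb (o1 : vec nO2) : vec nOm := [ffun k => rshift (nO1 k) (o1 k)].
rewrite (reindex_onto emb (fun o : vec nOm => [ffun k => pi2 k (o k)])); last first.
  move=> o /forallP Ho; apply/ffunP => k; rewrite !ffunE /pi2.
  move: (Ho k); rewrite /isl; case E: (split (o k)) => [//|o1] _.
  by rewrite -[o k]splitK E.
have embK : forall o1, [ffun k => pi2 k (emb o1 k)] = o1.
  by move=> o1; apply/ffunP => k; rewrite !ffunE /pi2 split_r.
rewrite (eq_bigl xpredT); last first.
  move=> o1; rewrite embK eqxx andbT; apply/forallP => k.
  by rewrite /emb ffunE /isl split_r.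
apply: eq_bigr => o1 _; apply: eq_bigr => k _.
by rewrite /postproc ffunE embK /Lmix /= /e2 /emb ffunE !split_r.
Qed.

End Mix.


Lemma compose_mix2 N (nA nX nI nO : 'I_N -> nat) (L : local_int R nA nX nI nO)
  (l m : R) V V' x a :
  compose L (fun i o => l * V i o + m * V' i o) x a =
  l * compose L V x a + m * compose L V' x a.
Proof.
rewrite /compose !mulr_sumr -big_split; apply: eq_bigr => i _.
rewrite !mulr_sumr -big_split; apply: eq_bigr => o _.
by rewrite mulrDr; congr (_ + _); rewrite mulrCA.
Qed.

Lemma compose_ext N (nA nX nI nO : 'I_N -> nat) (L : local_int R nA nX nI nO)
  W W' x a : (forall i o, W i o = W' i o) -> compose L W x a = compose L W' x a.
Proof.
by move=> H; apply: eq_bigr => i _; apply: eq_bigr => o _; rewrite H.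
Qed.

Lemma nonempty_out N (nA nX nI nO : 'I_N -> nat) (L : local_int R nA nX nI nO) (W : vec nI -> vec nO -> R)
  (a0 : vec nA) :
  valid_local_int L -> det_extrema_polytope W -> exists o : vec nO, True.
Proof.
move=> HL [m [w [qs [w0 w1 Sq _]]]].
case: (pickP (@predT (vec nO))) => [o _|H]; first by exists o.
exfalso; case: m w w0 w1 qs Sq => [|m] w w0 w1 qs Sq.
  by move: w1; rewrite big_ord0 => /eqP; rewrite eq_sym oner_eq0.
have [om [Hom _]] := Sq ord0.
have := proj2 (Hom nA nX L HL) a0.
under eq_bigr do rewrite compose_delta big_pred0 //.
by rewrite big1 // => /eqP; rewrite eq_sym oner_eq0.
Qed.

Lemma DC_convex N (nA nX : 'I_N -> nat) : convex_set (@det_consistent R N nA nX).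
Proof.
move=> p q l l0 l1 [nI1 [nO1 [L1 [W1 [HL1 HW1 Hp]]]]]
  [nI2 [nO2 [L2 [W2 [HL2 HW2 Hq]]]]].
case: (pickP (@predT (vec nA))) => [a0 _|Ha]; last first.
  suff -> : (fun t u => l * p t u + (1 - l) * q t u) = p.
    by exists nI1, nO1, L1, W1.
  apply: functional_extensionality => x; apply: functional_extensionality => a.
  by have := Ha a.
have [d1 _] := nonempty_out a0 HL1 HW1.
have [d2 _] := nonempty_out a0 HL2 HW2.
move: HW1 HW2 => [m1 [w1 [qs1 [w10 w11 S1 HW1e]]]] [m2 [w2 [qs2 [w20 w21 S2 HW2e]]]].
have om1 : forall j, {om | process_function R om /\ qs1 j = delta_fun R om}.
  by move=> j; apply: constructive_indefinite_description; apply: S1.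
have om2 : forall j, {om | process_function R om /\ qs2 j = delta_fun R om}.
  by move=> j; apply: constructive_indefinite_description; apply: S2.
pose o1' j := postproc (proj1_sig (om1 j)) (e1 _ _ nI2) (pi1 _ _ nO2 d1).
pose o2' j := postproc (proj1_sig (om2 j)) (e2 _ nI1 _) (pi2 _ nO1 _ d2).
exists (nIm _ nI1 nI2), (nOm _ nO1 nO2), (Lmix _ _ _ _ _ _ _ L1 L2).
exists (fun i o => l * (\sum_j w1 j * delta_fun R (o1' j) i o) +
           (1 - l) * (\sum_j w2 j * delta_fun R (o2' j) i o)).
split.
- exact: Lmix_valid.
- apply: (conv_hull_convex l0 l1).
    exists m1, w1, (fun j => delta_fun R (o1' j)); split => // j.
    exists (o1' j); split => //; apply: proc_post; exact: (proj1 (proj2_sig (om1 j))).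
  exists m2, w2, (fun j => delta_fun R (o2' j)); split => // j.
  exists (o2' j); split => //; apply: proc_post; exact: (proj1 (proj2_sig (om2 j))).
- move=> x a; rewrite compose_mix2 !compose_lin Hp Hq.
  rewrite (compose_ext _ _ _ HW1e) (compose_ext _ _ _ HW2e) !compose_lin.
  congr (l * _ + (1 - l) * _); apply: eq_bigr => j _.
    by rewrite (proj2 (proj2_sig (om1 j))) embed1.
  by rewrite (proj2 (proj2_sig (om2 j))) embed2.
Qed.


Lemma decomp1 (T U : finType) (p : T -> U -> R) t u :
  (forall u, \sum_t p t u = 1) ->
  \sum_(g : {ffun U -> T}) (\prod_u' p (g u') u') * delta_fun R g t u = p t u.
Proof.
move=> Hp.
transitivity (\sum_(g : {ffun U -> T}) \prod_u'
   (p (g u') u' * (if u' == u then (if t == g u' then 1 else 0) else 1))).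
  apply: eq_bigr => g _; rewrite big_split /=; congr (_ * _).
  rewrite (bigD1 u) //= eqxx big1 ?mulr1 // => u' ne; by rewrite (negbTE ne).
rewrite -(bigA_distr_bigA (fun u' t' =>
   p t' u' * (if u' == u then (if t == t' then 1 else 0) else 1))).
rewrite (bigD1 u) //= [X in _ * X]big1 ?mulr1; last first.
  move=> u' ne; under eq_bigr do rewrite (negbTE ne) mulr1; apply: Hp.
rewrite eqxx (bigD1 t) //= eqxx mulr1 big1 ?addr0 // => t' ne.
by rewrite eq_sym (negbTE ne) mulr0.
Qed.

Lemma decomp1_w (T U : finType) (p : T -> U -> R) :
  (forall u, \sum_t p t u = 1) ->
  \sum_(g : {ffun U -> T}) (\prod_u' p (g u') u') = 1.
Proof.
move=> Hp; rewrite -(bigA_distr_bigA (fun u' t' => p t' u')).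
by apply: big1 => u' _; apply: Hp.
Qed.


Lemma delta_valid (T U : finType) (g : U -> T) : is_cond (delta_fun R g).
Proof.
split; first by move=> t u; rewrite /delta_fun; case: ifP => _; rewrite ?ler01.
move=> u; rewrite (bigD1 (g u)) //= /delta_fun eqxx big1 ?addr0 // => t ne.
by rewrite (negbTE ne).
Qed.

Lemma party_ind N (nA nX nI nO : 'I_N -> nat) (C : (vec nX -> vec nA -> R) -> Prop)
  (hC : convex_set C) (W : vec nI -> vec nO -> R) :
  (forall L : local_int R nA nX nI nO, valid_local_int L ->
     (forall k, exists f, L k = delta_fun R f) -> C (compose L W)) ->
  forall L : local_int R nA nX nI nO, valid_local_int L -> C (compose L W).
Proof.
move=> Hbase.
suff H : forall n, (n <= N)%N -> forall L : local_int R nA nX nI nO,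
    valid_local_int L ->
    (forall k : 'I_N, (n <= k)%N -> exists f, L k = delta_fun R f) ->
    C (compose L W).
  by move=> L HL; apply: (H N (leqnn N)) => // k; rewrite leqNgt ltn_ord.
elim=> [_ L HL HD|n IH Hn L HL HD]; first by apply: Hbase => // k; apply: HD.
pose k0 : 'I_N := Ordinal Hn.
pose T := ('I_(nX k0) * 'I_(nO k0))%type.
pose U := ('I_(nA k0) * 'I_(nI k0))%type.
pose Lg (g : {ffun U -> T}) : local_int R nA nX nI nO :=
  @dfwith _ (fun k => 'I_(nX k) * 'I_(nO k) -> 'I_(nA k) * 'I_(nI k) -> R)
     L k0 (delta_fun R g).
apply: (@convex_fin _ _ _ _ hC _ (fun g : {ffun U -> T} => \prod_u L k0 (g u) u)
          (fun g => compose (Lg g) W)).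
- by move=> g; apply: prodr_ge0 => u _; case: (HL k0).
- by apply: decomp1_w; case: (HL k0).
- move=> g; apply: IH; first exact: ltnW.
    move=> k; rewrite /Lg; case: (eqVneq k0 k) => [<-|ne].
      by rewrite dfwith_in; apply: delta_valid.
    by rewrite dfwith_out //; apply: HL.
  move=> k Hk; rewrite /Lg; case: (eqVneq k0 k) => [<-|ne].
    by rewrite dfwith_in; exists g.
  rewrite dfwith_out //; apply: HD.
  rewrite ltn_neqAle Hk andbT; apply: contra ne => /eqP e.
  by apply/eqP/val_inj.
- move=> x a; rewrite /compose.
  transitivity (\sum_(i : vec nI) \sum_(o : vec nO) \sum_(g : {ffun U -> T}) (\prod_u L k0 (g u) u) *
     (delta_fun R g (x k0, o k0) (a k0, i k0) *
      \prod_(k | k != k0) L k (x k, o k) (a k, i k) * W i o)).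
    apply: eq_bigr => i _; apply: eq_bigr => o _.
    rewrite (bigD1 k0) //= -(decomp1 (x k0, o k0) (a k0, i k0) (proj2 (HL k0))).
    rewrite !mulr_suml; apply: eq_bigr => g _; by rewrite !mulrA.
  symmetry; under eq_bigr do rewrite mulr_sumr.
  rewrite exchange_big; apply: eq_bigr => i _.
  under eq_bigr do rewrite mulr_sumr.
  rewrite exchange_big; apply: eq_bigr => o _; apply: eq_bigr => g _.
  congr (_ * (_ * _)).
  rewrite (bigD1 k0) //= /Lg dfwith_in; congr (_ * _).
  apply: eq_bigr => k ne; rewrite dfwith_out //; by rewrite eq_sym.
Qed.


Lemma sum1_unique (I : finType) (c : I -> nat) :
  (\sum_i c i = 1)%N -> exists i, c i = 1%N /\ forall j, j != i -> c j = 0%N.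
Proof.
move=> Hs; case: (pickP (fun i => 0 < c i)%N) => [i ci|H]; last first.
  move: Hs; rewrite big1 // => j _; by move/negbT: (H j); rewrite -eqn0Ngt => /eqP.
move: Hs; rewrite (bigD1 i) //= => Hs.
have [ci1 Hr] : c i = 1%N /\ (\sum_(j | j != i) c j = 0)%N by move: ci Hs; lia.
exists i; split => // j ne; move/eqP: Hr; rewrite sum_nat_eq0 => /forallP/(_ j).
by rewrite ne => /eqP.
Qed.

Lemma det_base N (nA nX nI nO : 'I_N -> nat) (L : local_int R nA nX nI nO)
  (om : vec nO -> vec nI) :
  process_function R om -> valid_local_int L ->
  (forall k, exists f, L k = delta_fun R f) ->
  deterministic_corr (compose L (delta_fun R om)).
Proof.
move=> Hom HL HD.
have Hc := Hom nA nX L HL.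
pose cnt (x : vec nX) (a : vec nA) : nat :=
  #|[pred o : vec nO | [forall k, L k (x k, o k) (a k, om o k) == 1]]|.
have L01 : forall k t u, L k t u = if L k t u == 1 then 1 else 0.
  move=> k t u; have [f ->] := HD k; rewrite /delta_fun.
  by case: ifP => _; rewrite ?eqxx // eq_sym oner_eq0.
have Ecnt : forall x a, compose L (delta_fun R om) x a = (cnt x a)%:R.
  move=> x a; rewrite compose_delta.
  under eq_bigr do (under eq_bigr do rewrite L01; rewrite prod_ind).
  by rewrite -big_mkcond /= sumr_const.
have Hex : forall a, exists x, cnt x a == 1%N.
  move=> a; have := proj2 Hc a; under eq_bigr do rewrite Ecnt.
  rewrite -natr_sum => /eqP; rewrite pnatr_eq1 => /eqP /sum1_unique [x [Hx _]].
  by exists x; rewrite Hx.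
exists (fun a => xchoose (Hex a)).
apply: functional_extensionality => x; apply: functional_extensionality => a.
rewrite Ecnt /delta_fun.
have := proj2 Hc a; under eq_bigr do rewrite Ecnt.
rewrite -natr_sum => /eqP; rewrite pnatr_eq1 => /eqP /sum1_unique [x0 [Hx0 Hu]].
have gx0 : xchoose (Hex a) = x0.
  apply/eqP; apply: contraT => ne.
  by move: (xchooseP (Hex a)); rewrite Hu.
rewrite gx0; case: eqVneq => [->|ne]; first by rewrite Hx0.
by rewrite Hu.
Qed.

End Comp.

Theorem mainTheorem6 (R : realType) (N : nat) (nA nX : 'I_N -> nat) :
  convex_set (@det_consistent R N nA nX) /\
  (forall p : vec nX -> vec nA -> R,
     det_consistent p <->
     conv_hull (fun q => deterministic_corr q /\ det_consistent q) p).
Proof.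
split; first exact: DC_convex.
move=> p; split; last first.
  by apply: conv_hull_sub; [exact: DC_convex | move=> q []].
move=> [nI [nO [L [W [HL [m [w [qs [w0 w1 S Hqs]]]] Hp]]]]].
apply: (@convex_fin _ _ _ _ (@conv_hull_convex _ _ _ _) _ w
          (fun j => compose L (qs j))) => //.
- move=> j; have [om [Hom ->]] := S j.
  apply: (@party_ind _ _ _ _ _ _ _ (@conv_hull_convex _ _ _ _)) => // L' HL' HD.
  apply: conv_hull_in; split; first exact: det_base.
  exists nI, nO, L', (delta_fun R om); split => //.
  by apply: conv_hull_in; exists om.
- by move=> x a; rewrite Hp (compose_ext _ _ _ Hqs) compose_lin.
Qed.
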